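(* Let $X_0^*$ be a $\{1,2,\dots\}$-valued random variable with $\mathbf P(X_0^*\ge2)>0$ and $\mathbf E(X_0^*m^{X_0^*})<\infty$, let $p>p_c$, let $X_0$ have law $(1-p)\delta_0+pP_{X_0^*}$, and let $n\ge0$. Then: (i) the functions $s\mapsto \varphi_n(s):=(m-1)sH_n'(s)-H_n(s)$ and $s\mapsto \varphi_n(s)/s$ are non-decreasing on $(0,m]$; (ii) $H_n(m)\le m^{1/(m-1)}\mathrm e^{\delta_n}$; (iii) for all $s\in[1,m]$, $$\frac{H_n(s)^{m-1}}{s}\ge\frac{H_n(m)^{m-1}}{m}\big[1-m(m-s)\,\delta_n\,\mathrm e^{(m-1)\delta_n}\big].$$
   Context: Fix an integer $m\ge2$. Recursive system: $X_{n+1}$ has the law of $(X_{n,1}+\cdots+X_{n,m}-1)^+$, with $X_{n,i}$ independent copies of $X_n$. $p_c:=\frac{1}{1+\mathbf E\{[(m-1)X_0^*-1]m^{X_0^*}\}}$. $H_n(s):=\mathbf E(s^{X_n})$ is the generating function of $X_n$, and $\delta_n:=m(m-1)H_n'(m)-H_n(m)=(m-1)\mathbf E(X_nm^{X_n})-\mathbf E(m^{X_n})$ (which is positive for $p>p_c$). *)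

(* Defs.v *)
From Stdlib Require Import Reals Lra Lia ClassicalEpsilon.
Open Scope R_scope.

(* Value of a convergent series (sum_{k>=0} f k); arbitrary if it diverges. *)
Definition ser (f : nat -> R) : R :=
  epsilon (inhabits 0) (fun l => infinite_sum f l).

(* Convolution of two laws on nat (law of the sum of independent variables). *)
Definition conv (a b : nat -> R) (k : nat) : R :=
  sum_f_R0 (fun i => a i * b (k - i)%nat) k.

Fixpoint convpow (a : nat -> R) (j : nat) : nat -> R :=
  match j with
  | O => fun k => if Nat.eqb k 0 then 1 else 0
  | S j' => conv a (convpow a j')
  end.

(* Law of (X_1 + ... + X_m - 1)^+ where X_i are i.i.d. with law a. *)
Definition step (m : nat) (a : nat -> R) (k : nat) : R :=
  let Y := convpow a m in
  if Nat.eqb k 0 then Y 0%nat + Y 1%nat else Y (S k).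

Definition law0 (p : R) (qstar : nat -> R) (k : nat) : R :=
  if Nat.eqb k 0 then 1 - p else p * qstar k.

(* Law of X_n : lawn m p qstar n k = P(X_n = k). *)
Definition lawn (m : nat) (p : R) (qstar : nat -> R) (n : nat) : nat -> R :=
  Nat.iter n (step m) (law0 p qstar).

Definition H (m : nat) (p : R) (qstar : nat -> R) (n : nat) (s : R) : R :=
  ser (fun k => lawn m p qstar n k * s ^ k).

(* s H_n'(s) = E(X_n s^{X_n}). *)
Definition sH' (m : nat) (p : R) (qstar : nat -> R) (n : nat) (s : R) : R :=
  ser (fun k => INR k * lawn m p qstar n k * s ^ k).

Definition phi (m : nat) (p : R) (qstar : nat -> R) (n : nat) (s : R) : R :=
  (INR m - 1) * sH' m p qstar n s - H m p qstar n s.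

Definition delta (m : nat) (p : R) (qstar : nat -> R) (n : nat) : R :=
  phi m p qstar n (INR m).

Definition pc (m : nat) (qstar : nat -> R) : R :=
  1 / (1 + ser (fun k => ((INR m - 1) * INR k - 1) * INR m ^ k * qstar k)).

(* Main.v *)
Require Import Defs.
From Stdlib Require Import Reals Lra Lia ClassicalEpsilon.
From Coquelicot Require Import Coquelicot.
Open Scope R_scope.

Lemma isP a b la lb : is_series a la -> is_series b lb -> is_series (fun n => a n + b n) (la + lb).
Proof. apply (is_series_plus a b la lb). Qed.
Lemma isM a b la lb : is_series a la -> is_series b lb -> is_series (fun n => a n - b n) (la - lb).
Proof. apply (is_series_minus a b la lb). Qed.
Lemma isS c a la : is_series a la -> is_series (fun n => c * a n) (c * la).
Proof. apply (is_series_scal_l c a la). Qed.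

Lemma isE (a b : nat -> R) (l : R) : (forall n, a n = b n) -> is_series a l -> is_series b l.
Proof. apply is_series_ext. Qed.

Lemma ser_eq f l : is_series f l -> ser f = l.
Proof.
  intros H. apply is_series_Reals in H. unfold ser.
  pose proof (epsilon_spec (inhabits 0) (fun l => infinite_sum f l) (ex_intro _ l H)) as H2.
  eapply uniqueness_sum; eauto.
Qed.

Lemma is_series_le_gen f g l1 l2 : is_series f l1 -> is_series g l2 -> (forall k, f k <= g k) -> l1 <= l2.
Proof.
  intros H1 H2 H. apply is_series_Reals in H1. apply is_series_Reals in H2.
  eapply Rle_cv_lim; [|exact H1|exact H2]. intros n. apply sum_Rle. intros; auto.
Qed.

Lemma sum_ind c n : sum_f_R0 (fun k => if Nat.eqb k 0 then c else 0) n = c.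
Proof. induction n as [|n IH]; [simpl; ring|]. rewrite tech5, IH. simpl. ring. Qed.

Lemma is_series_ind c : is_series (fun k => if Nat.eqb k 0 then c else 0) c.
Proof.
  apply is_series_Reals. intros eps He. exists 0%nat. intros n _.
  rewrite sum_ind. unfold R_dist. rewrite Rminus_diag, Rabs_R0. lra.
Qed.
Lemma is_series_zero f : (forall k, f k = 0) -> is_series f 0.
Proof.
  intros H. eapply isE. 2: apply (is_series_ind 0).
  intros k. rewrite H. destruct (Nat.eqb k 0); auto.
Qed.

Lemma partial_le f l N : is_series f l -> (forall k, (1 <= k)%nat -> 0 <= f k) -> sum_f_R0 f N <= l.
Proof.
  intros H Hp. apply is_series_Reals, is_lim_seq_Reals in H.
  assert (Hm : forall d, sum_f_R0 f N <= sum_f_R0 f (N + d)).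
  { induction d. rewrite Nat.add_0_r. lra.
    rewrite Nat.add_succ_r. simpl. assert (0 <= f (S (N + d))) by (apply Hp; lia). lra. }
  assert (Hl : Rbar_le (sum_f_R0 f N) l).
  { apply (is_lim_seq_le_loc (fun _ => sum_f_R0 f N) (sum_f_R0 f)); auto.
    - exists N. intros n Hn. replace n with (N + (n - N))%nat by lia. apply Hm.
    - apply is_lim_seq_const. }
  exact Hl.
Qed.

Lemma ex_series_cmp f g : (forall k, 0 <= f k <= g k) -> ex_series g -> ex_series f.
Proof.
  intros H Hg. apply (ex_series_le f g); auto. intros k.
  change (Rabs (f k) <= g k). rewrite Rabs_pos_eq; apply H.
Qed.

Definition ws (a : nat -> R) (s : R) (k : nat) := a k * s ^ k.
Definition wk (a : nat -> R) (s : R) (k : nat) := INR k * a k * s ^ k.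

Lemma pow_split s i k : (i <= k)%nat -> s ^ k = s ^ i * s ^ (k - i).
Proof. intros H. rewrite <- pow_add. f_equal. lia. Qed.

Lemma conv_ws a b s k : ws (conv a b) s k = sum_f_R0 (fun i => ws a s i * ws b s (k - i)) k.
Proof.
  unfold ws, conv. rewrite Rmult_comm, scal_sum. apply sum_eq. intros i Hi.
  rewrite (pow_split s i k Hi). ring.
Qed.

Lemma conv_wk a b s k : wk (conv a b) s k =
  sum_f_R0 (fun i => wk a s i * ws b s (k - i)) k + sum_f_R0 (fun i => ws a s i * wk b s (k - i)) k.
Proof.
  unfold ws, wk, conv. rewrite <- plus_sum.
  replace (INR k * sum_f_R0 (fun i => a i * b (k - i)%nat) k * s ^ k)
    with (INR k * s ^ k * sum_f_R0 (fun i => a i * b (k - i)%nat) k) by ring.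
  rewrite scal_sum. apply sum_eq. intros i Hi.
  rewrite (pow_split s i k Hi), (minus_INR k i Hi). ring.
Qed.

Lemma ws_nonneg a s k : (forall k, 0 <= a k) -> 0 <= s -> 0 <= ws a s k.
Proof. intros Ha Hs. unfold ws. apply Rmult_le_pos; auto. apply pow_le; auto. Qed.
Lemma wk_nonneg a s k : (forall k, 0 <= a k) -> 0 <= s -> 0 <= wk a s k.
Proof. intros Ha Hs. unfold wk. apply Rmult_le_pos; [apply Rmult_le_pos; auto; apply pos_INR|apply pow_le; auto]. Qed.

Lemma convpow_series a s A B : (forall k, 0 <= a k) -> 0 <= s ->
  is_series (ws a s) A -> is_series (wk a s) B -> forall j,
  (forall k, 0 <= convpow a j k) /\ is_series (ws (convpow a j) s) (A ^ j)
  /\ is_series (wk (convpow a j) s) (INR j * A ^ (pred j) * B).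
Proof.
  intros Ha Hs HA HB j. induction j as [|j [IH1 [IH2 IH3]]].
  - simpl. split; [|split].
    + intros k. destruct (Nat.eqb k 0); lra.
    + eapply isE; [|apply (is_series_ind 1)].
      intros k. unfold ws. simpl. destruct k; simpl; ring.
    + replace (0 * 1 * B) with 0 by ring. apply is_series_zero.
      intros k. unfold wk. destruct k; simpl; ring.
  - assert (Hw1 : forall k, 0 <= ws a s k) by (intros; apply ws_nonneg; auto).
    assert (Hw2 : forall k, 0 <= ws (convpow a j) s k) by (intros; apply ws_nonneg; auto).
    assert (Hw3 : forall k, 0 <= wk a s k) by (intros; apply wk_nonneg; auto).
    assert (Hw4 : forall k, 0 <= wk (convpow a j) s k) by (intros; apply wk_nonneg; auto).
    split; [|split].
    + intros k. simpl. unfold conv. apply cond_pos_sum. intros i. apply Rmult_le_pos; auto.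
    + eapply isE. { intros k. symmetry. simpl. apply conv_ws. }
      simpl. apply is_series_mult_pos; auto.
    + eapply isE. { intros k. symmetry. simpl. apply conv_wk. }
      replace (INR (S j) * A ^ pred (S j) * B) with (B * A ^ j + A * (INR j * A ^ pred j * B)).
      2:{ destruct j; [simpl; ring|]. rewrite (S_INR (S j)). simpl. ring. }
      apply isP; apply is_series_mult_pos; auto.
Qed.

Lemma shift1 (f : nat -> R) (l : R) : is_series f l -> is_series (fun k => f (S k)) (l - f 0%nat).
Proof.
  intros H. apply is_series_incr_1.
  unfold plus; simpl. replace (l - f 0%nat + f 0%nat) with l by ring. exact H.
Qed.

Lemma step_series Y s AY BY : 0 < s -> is_series (ws Y s) AY -> is_series (wk Y s) BY ->
  is_series (fun k => (if Nat.eqb k 0 then Y 0%nat else 0) + Y (S k) * s ^ k) (Y 0%nat + (AY - Y 0%nat) / s) /\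
  is_series (fun k => INR k * Y (S k) * s ^ k) ((BY - AY + Y 0%nat) / s).
Proof.
  intros Hs HA HB. pose proof (shift1 _ _ HA) as SA. pose proof (shift1 _ _ HB) as SB.
  unfold ws, wk in SA, SB.
  split.
  - apply isP. apply is_series_ind.
    replace ((AY - Y 0%nat) / s) with (/ s * (AY - Y 0%nat * s ^ 0)) by (simpl; field; lra).
    eapply isE; [|apply isS, SA]. intros k. simpl. field. lra.
  - replace ((BY - AY + Y 0%nat) / s) with (/ s * ((BY - INR 0 * Y 0%nat * s ^ 0) - (AY - Y 0%nat * s ^ 0))) by (simpl; field; lra).
    eapply isE; [|apply isS, isM; [apply SB|apply SA]]. intros k. cbv beta.
    rewrite S_INR. simpl. field. lra.
Qed.

Lemma step_ws m a s k : ws (step m a) s k = (if Nat.eqb k 0 then convpow a m 0%nat else 0) + convpow a m (S k) * s ^ k.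
Proof. unfold ws, step. destruct k; simpl; ring. Qed.
Lemma step_wk m a s k : wk (step m a) s k = INR k * convpow a m (S k) * s ^ k.
Proof. unfold wk, step. destruct k; simpl; ring. Qed.

Lemma ex_ws_le a s t : (forall k, 0 <= a k) -> 0 <= s <= t -> ex_series (ws a t) -> ex_series (ws a s).
Proof.
  intros Ha Hs. apply ex_series_cmp. intros k. split. apply ws_nonneg; auto; lra.
  unfold ws. apply Rmult_le_compat_l; auto. apply pow_incr; auto.
Qed.
Lemma ex_wk_le a s t : (forall k, 0 <= a k) -> 0 <= s <= t -> ex_series (wk a t) -> ex_series (wk a s).
Proof.
  intros Ha Hs. apply ex_series_cmp. intros k. split. apply wk_nonneg; auto; lra.
  unfold wk. apply Rmult_le_compat_l; auto. apply Rmult_le_pos; auto; apply pos_INR. apply pow_incr; auto.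
Qed.

Lemma series_nonneg f l : (forall k, 0 <= f k) -> is_series f l -> 0 <= l.
Proof. intros Hf H. apply (is_series_le_gen (fun _ => 0) f); auto. apply is_series_zero; auto. Qed.

Definition Inv m a := (forall k, 0 <= a k) /\ ex_series (ws a (INR m)) /\ ex_series (wk a (INR m))
  /\ is_series (ws a 1) 1 /\ 0 <= (INR m - 1) * Series (wk a (INR m)) - Series (ws a (INR m)).

Lemma INR_ge2 m : (2 <= m)%nat -> 2 <= INR m.
Proof. intros H. replace 2 with (INR 2) by (simpl; ring). apply le_INR; lia. Qed.

Lemma Inv_step m a : (2 <= m)%nat -> Inv m a -> Inv m (step m a).
Proof.
  intros Hm [Ha [EA [EB [H1 Hd]]]]. pose proof (INR_ge2 m Hm) as HM.
  pose proof (Series_correct _ EA) as HA. pose proof (Series_correct _ EB) as HB.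
  set (A := Series (ws a (INR m))) in *. set (B := Series (wk a (INR m))) in *.
  destruct (convpow_series a (INR m) A B Ha ltac:(lra) HA HB m) as [HY [HYA HYB]].
  destruct (step_series (convpow a m) (INR m) _ _ ltac:(lra) HYA HYB) as [S1 S2].
  assert (SA : is_series (ws (step m a) (INR m)) (convpow a m 0%nat + (A ^ m - convpow a m 0%nat) / INR m)).
  { eapply isE; [|exact S1]. intros k. symmetry. apply step_ws. }
  assert (SB : is_series (wk (step m a) (INR m)) ((INR m * A ^ pred m * B - A ^ m + convpow a m 0%nat) / INR m)).
  { eapply isE; [|exact S2]. intros k. symmetry. apply step_wk. }
  assert (EB1 : ex_series (wk a 1)) by (apply (ex_wk_le a 1 (INR m)); auto; lra).
  pose proof (Series_correct _ EB1) as HB1.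
  destruct (convpow_series a 1 1 _ Ha ltac:(lra) H1 HB1 m) as [_ [HYA1 HYB1]].
  destruct (step_series (convpow a m) 1 _ _ ltac:(lra) HYA1 HYB1) as [S11 _].
  assert (HA0 : 0 <= A) by (apply (series_nonneg (ws a (INR m))); auto; intros; apply ws_nonneg; auto; lra).
  split; [|split; [|split; [|split]]].
  - intros k. unfold step. destruct (Nat.eqb k 0); auto. apply Rplus_le_le_0_compat; auto.
  - eexists; exact SA.
  - eexists; exact SB.
  - replace 1 with (convpow a m 0%nat + (1 ^ m - convpow a m 0%nat) / 1) at 2 by (rewrite pow1; field).
    eapply isE; [|exact S11].
    intros k. symmetry. apply step_ws.
  - rewrite (is_series_unique _ _ SA), (is_series_unique _ _ SB).
    destruct m as [|m']; [lia|]. simpl pred.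
    set (M := INR (S m')) in *.
    replace ((M - 1) * ((M * A ^ m' * B - A ^ S m' + convpow a (S m') 0%nat) / M) -
      (convpow a (S m') 0%nat + (A ^ S m' - convpow a (S m') 0%nat) / M))
      with (A ^ m' * ((M - 1) * B - A)) by (simpl; field; lra).
    apply Rmult_le_pos; auto. apply pow_le; auto.
Qed.

Lemma law0_ws p q s k : q 0%nat = 0 -> ws (law0 p q) s k = (if Nat.eqb k 0 then 1 - p else 0) + p * ws q s k.
Proof. intros H0. unfold ws, law0. destruct k; simpl; [rewrite H0|]; ring. Qed.
Lemma law0_wk p q s k : q 0%nat = 0 -> wk (law0 p q) s k = p * wk q s k.
Proof. intros H0. unfold wk, law0. destruct k; simpl; [rewrite H0|]; ring. Qed.

Lemma Inv_base m q p : (2 <= m)%nat -> (forall k, 0 <= q k) -> infinite_sum q 1 -> q 0%nat = 0 ->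
  (exists l, infinite_sum (fun k => INR k * INR m ^ k * q k) l) -> pc m q < p -> p <= 1 ->
  Inv m (law0 p q).
Proof.
  intros Hm Hq Hs H0 [l Hl] Hp Hp1. pose proof (INR_ge2 m Hm) as HM.
  assert (HB : is_series (wk q (INR m)) l).
  { apply is_series_Reals in Hl. eapply isE; [|exact Hl]. intros k. unfold wk. ring. }
  assert (EA : ex_series (ws q (INR m))).
  { apply (ex_series_cmp _ (wk q (INR m))); [|eexists; exact HB]. intros k. split.
    apply ws_nonneg; auto; lra. unfold wk, ws. destruct k.
    - rewrite H0. simpl. lra.
    - rewrite Rmult_assoc. rewrite <- (Rmult_1_l (q (S k) * INR m ^ S k)) at 1.
      apply Rmult_le_compat_r. apply Rmult_le_pos; auto. apply pow_le; lra.
      rewrite S_INR. pose proof (pos_INR k). lra. }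
  pose proof (Series_correct _ EA) as HA. set (A := Series (ws q (INR m))) in *.
  assert (HE : is_series (fun k => ((INR m - 1) * INR k - 1) * INR m ^ k * q k) ((INR m - 1) * l - A)).
  { eapply isE; [|apply isM; [apply isS; exact HB|exact HA]]. intros k. cbv beta. unfold wk, ws. ring. }
  assert (HE0 : 0 <= (INR m - 1) * l - A).
  { apply (series_nonneg _ _ ) in HE; auto. intros k. destruct k.
    - rewrite H0. simpl. lra.
    - apply Rmult_le_pos; [|auto]. apply Rmult_le_pos; [|apply pow_le; lra].
      rewrite S_INR. pose proof (pos_INR k). nra. }
  unfold pc in Hp. rewrite (ser_eq _ _ HE) in Hp.
  set (E := (INR m - 1) * l - A) in *.
  assert (Hp0 : 0 < p).
  { eapply Rle_lt_trans; [|exact Hp]. unfold Rdiv. rewrite Rmult_1_l. left. apply Rinv_0_lt_compat. lra. }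
  assert (HpE : 1 < p * (1 + E)).
  { replace 1 with (1 / (1 + E) * (1 + E)) at 1 by (field; lra). apply Rmult_lt_compat_r; lra. }
  assert (SA : is_series (ws (law0 p q) (INR m)) ((1 - p) + p * A)).
  { eapply isE; [|apply isP; [apply is_series_ind|apply isS; exact HA]].
    intros k. symmetry. apply law0_ws; auto. }
  assert (SB : is_series (wk (law0 p q) (INR m)) (p * l)).
  { eapply isE; [|apply isS; exact HB]. intros k. symmetry. apply law0_wk; auto. }
  split; [|split; [|split; [|split]]].
  - intros k. unfold law0. destruct (Nat.eqb k 0). lra. apply Rmult_le_pos; auto; lra.
  - eexists; exact SA.
  - eexists; exact SB.
  - replace 1 with ((1 - p) + p * 1) at 2 by ring.
    eapply isE; [|apply isP; [apply is_series_ind|apply isS]].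
    intros k. symmetry. apply law0_ws; auto.
    apply is_series_Reals in Hs. eapply isE; [|exact Hs]. intros k. unfold ws. rewrite pow1. ring.
  - rewrite (is_series_unique _ _ SA), (is_series_unique _ _ SB). unfold E in HpE. nra.
Qed.

Lemma Inv_lawn m p q n : (2 <= m)%nat -> (forall k, 0 <= q k) -> infinite_sum q 1 -> q 0%nat = 0 ->
  (exists l, infinite_sum (fun k => INR k * INR m ^ k * q k) l) -> pc m q < p -> p <= 1 ->
  Inv m (lawn m p q n).
Proof.
  intros. induction n. apply Inv_base; auto. apply (Inv_step m (lawn m p q n)); auto.
Qed.

Lemma series_at m a s : Inv m a -> 0 <= s <= INR m ->
  is_series (ws a s) (ser (ws a s)) /\ is_series (wk a s) (ser (wk a s)).
Proof.
  intros [Ha [EA [EB _]]] Hs.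
  pose proof (Series_correct _ (ex_ws_le a s (INR m) Ha Hs EA)) as H1.
  pose proof (Series_correct _ (ex_wk_le a s (INR m) Ha Hs EB)) as H2.
  rewrite (ser_eq _ _ H1), (ser_eq _ _ H2). auto.
Qed.

Definition phig m a s := (INR m - 1) * ser (wk a s) - ser (ws a s).
Definition cterm m a s k := (INR m - 1) * wk a s k - ws a s k.

Lemma cterm_series m a s : Inv m a -> 0 <= s <= INR m -> is_series (cterm m a s) (phig m a s).
Proof.
  intros HI Hs. destruct (series_at m a s HI Hs) as [H1 H2].
  apply isM; auto. apply isS; auto.
Qed.

Lemma cterm_eq m a s k : cterm m a s k = ((INR m - 1) * INR k - 1) * a k * s ^ k.
Proof. unfold cterm, wk, ws. ring. Qed.

Lemma coef_nonneg m k : (2 <= m)%nat -> 0 <= (INR m - 1) * INR (S k) - 1.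
Proof. intros Hm. pose proof (INR_ge2 m Hm). rewrite S_INR. pose proof (pos_INR k). nra. Qed.

Lemma partI m a s t : (2 <= m)%nat -> Inv m a -> 0 < s -> s <= t -> t <= INR m ->
  phig m a s <= phig m a t /\ phig m a s / s <= phig m a t / t.
Proof.
  intros Hm HI Hs Hst HtM. pose proof HI as [Ha _].
  pose proof (cterm_series m a s HI ltac:(lra)) as Cs.
  pose proof (cterm_series m a t HI ltac:(lra)) as Ct.
  split.
  - apply (is_series_le_gen _ _ _ _ Cs Ct). intros k. rewrite !cterm_eq. destruct k.
    + simpl. lra.
    + apply Rmult_le_compat_l. apply Rmult_le_pos; auto. apply coef_nonneg; auto.
      apply pow_incr; lra.
  - unfold Rdiv. rewrite (Rmult_comm (phig m a s)), (Rmult_comm (phig m a t)).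
    apply (is_series_le_gen _ _ _ _ (isS (/ s) _ _ Cs) (isS (/ t) _ _ Ct)). intros k. rewrite !cterm_eq. destruct k.
    + simpl. pose proof (Ha 0%nat). 
      assert (/ t <= / s) by (apply Rinv_le_contravar; lra). nra.
    + replace (/ s * (((INR m - 1) * INR (S k) - 1) * a (S k) * s ^ S k))
        with (((INR m - 1) * INR (S k) - 1) * a (S k) * s ^ k) by (simpl; field; lra).
      replace (/ t * (((INR m - 1) * INR (S k) - 1) * a (S k) * t ^ S k))
        with (((INR m - 1) * INR (S k) - 1) * a (S k) * t ^ k) by (simpl; field; lra).
      apply Rmult_le_compat_l. apply Rmult_le_pos; auto. apply coef_nonneg; auto.
      apply pow_incr; lra.
Qed.

Lemma isDP (f g : R -> R) x df dg : is_derive f x df -> is_derive g x dg -> is_derive (fun y => f y + g y) x (df + dg).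
Proof. apply (is_derive_plus f g x df dg). Qed.
Lemma isDM (f g : R -> R) x df dg : is_derive f x df -> is_derive g x dg -> is_derive (fun y => f y - g y) x (df - dg).
Proof. apply (is_derive_minus f g x df dg). Qed.
Lemma isDE (f g : R -> R) x l : (forall y, f y = g y) -> is_derive f x l -> is_derive g x l.
Proof. apply is_derive_ext. Qed.
Lemma isDid x : is_derive (fun y : R => y) x 1.
Proof. apply is_derive_Reals. apply derivable_pt_lim_id. Qed.

Lemma mono_deriv c k x : is_derive (fun y => c * y ^ k) x (c * (INR k * x ^ pred k)).
Proof.
  apply is_derive_scal. replace (INR k * x ^ pred k) with (INR k * 1 * x ^ pred k) by ring.
  apply (is_derive_pow (fun y => y)). apply isDid.
Qed.

Definition PN a N x := sum_f_R0 (ws a x) N.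
Definition DN a N x := sum_f_R0 (fun k => a k * (INR k * x ^ pred k)) N.

Lemma PN_deriv a N x : is_derive (PN a N) x (DN a N x).
Proof.
  induction N.
  - unfold PN, DN, ws. simpl. apply (mono_deriv (a 0%nat) 0).
  - eapply isDE; [|apply isDP; [exact IHN|apply (mono_deriv (a (S N)) (S N))]].
    intros y. unfold PN. rewrite tech5. reflexivity.
Qed.

Lemma ln_deriv x : 0 < x -> is_derive ln x (/ x).
Proof. intros H. apply is_derive_Reals. apply derivable_pt_lim_ln; auto. Qed.

Definition gN m a N Dc x := (INR m - 1) * ln (PN a N x) - ln x - Dc * x.

Lemma gN_deriv m a N Dc x : 0 < x -> 0 < PN a N x ->
  is_derive (gN m a N Dc) x ((INR m - 1) * (DN a N x * / PN a N x) - / x - Dc).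
Proof.
  intros Hx HP. unfold gN. apply isDM. apply isDM.
  - apply is_derive_scal. apply (is_derive_comp ln (PN a N) x (/ PN a N x) (DN a N x)).
    apply ln_deriv; auto. apply PN_deriv.
  - apply ln_deriv; auto.
  - replace Dc with (Dc * 1) at 2 by ring. apply is_derive_scal. apply isDid.
Qed.

Lemma PN_ge a N x : (forall k, 0 <= a k) -> 1 <= x -> PN a N 1 <= PN a N x.
Proof.
  intros Ha Hx. unfold PN, ws. apply sum_Rle. intros k _. apply Rmult_le_compat_l; auto.
  apply pow_incr; lra.
Qed.

Lemma xDN a N x : x * DN a N x = sum_f_R0 (wk a x) N.
Proof.
  unfold DN. rewrite scal_sum. apply sum_eq. intros k _. unfold wk. destruct k; simpl; ring.
Qed.

Lemma PhiN_eq m a N x : sum_f_R0 (cterm m a x) N = (INR m - 1) * (x * DN a N x) - PN a N x.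
Proof.
  rewrite xDN. unfold PN, cterm. rewrite minus_sum. f_equal. rewrite scal_sum.
  apply sum_eq. intros; ring.
Qed.

Lemma phig_M m a : Inv m a -> phig m a (INR m) = (INR m - 1) * Series (wk a (INR m)) - Series (ws a (INR m)).
Proof.
  intros HI. assert (HM : 0 <= INR m <= INR m) by (split; [apply pos_INR|lra]).
  destruct (series_at m a _ HI HM) as [H1 H2]. unfold phig.
  rewrite (is_series_unique _ _ H1), (is_series_unique _ _ H2). auto.
Qed.

Lemma gprime_nonpos m a N e x : (2 <= m)%nat -> Inv m a -> 0 < e -> 1 <= x <= INR m ->
  1 <= (1 + e) * PN a N 1 ->
  (INR m - 1) * (DN a N x * / PN a N x) - / x - phig m a (INR m) * (1 + e) / INR m <= 0.
Proof.
  intros Hm HI He Hx Hc. pose proof HI as [Ha [_ [_ [_ Hd]]]].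
  rewrite <- phig_M in Hd; auto. set (d := phig m a (INR m)) in *.
  pose proof (INR_ge2 m Hm) as HM.
  pose proof (PN_ge a N x Ha (proj1 Hx)) as HP.
  assert (HP0 : 0 < PN a N x) by nra.
  assert (HPhi : sum_f_R0 (cterm m a x) N <= phig m a x).
  { apply partial_le. apply cterm_series; auto; lra.
    intros k Hk. rewrite cterm_eq. destruct k; [lia|]. apply Rmult_le_pos; [apply Rmult_le_pos|].
    apply coef_nonneg; auto. apply Ha. apply pow_le; lra. }
  destruct (partI m a x (INR m) Hm HI ltac:(lra) ltac:(lra) ltac:(lra)) as [_ Hdiv].
  fold d in Hdiv. rewrite PhiN_eq in HPhi.
  assert (Hphix : phig m a x <= x * (d / INR m)).
  { replace (phig m a x) with (x * (phig m a x / x)) by (field; lra).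
    apply Rmult_le_compat_l; lra. }
  set (P := PN a N x) in *. set (D := DN a N x) in *. set (M := INR m) in *.
  replace ((M - 1) * (D * / P) - / x - d * (1 + e) / M)
    with (((M - 1) * (x * D) - P - d * (1 + e) / M * x * P) * / (x * P)) by (field; lra).
  assert (0 < / (x * P)) by (apply Rinv_0_lt_compat; nra).
  assert (H1 : d / M * x <= d * (1 + e) / M * x * P).
  { replace (d * (1 + e) / M * x * P) with (d / M * x * ((1 + e) * P)) by (field; lra).
    rewrite <- (Rmult_1_r (d / M * x)) at 1. apply Rmult_le_compat_l.
    apply Rmult_le_pos; [apply Rmult_le_pos; [auto|left; apply Rinv_0_lt_compat; lra]|lra].
    nra. }
  nra.
Qed.

Lemma gN_mono m a N e s : (2 <= m)%nat -> Inv m a -> 0 < e -> 1 <= s <= INR m ->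
  1 <= (1 + e) * PN a N 1 ->
  gN m a N (phig m a (INR m) * (1 + e) / INR m) (INR m) <= gN m a N (phig m a (INR m) * (1 + e) / INR m) s.
Proof.
  intros Hm HI He Hs Hc. pose proof HI as [Ha _].
  set (Dc := phig m a (INR m) * (1 + e) / INR m).
  destruct (Req_dec s (INR m)) as [E|E]. { rewrite E. lra. }
  assert (Hpos : forall y, 1 <= y -> 0 < PN a N y).
  { intros y Hy. pose proof (PN_ge a N y Ha Hy). nra. }
  destruct (MVT_cor3 (gN m a N Dc) (fun y => (INR m - 1) * (DN a N y * / PN a N y) - / y - Dc) s (INR m))
    as [c [Hc1 [Hc2 Heq]]].
  - lra.
  - intros y Hy1 Hy2. apply is_derive_Reals. apply gN_deriv; [lra|]. apply Hpos; lra.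
  - rewrite Heq. pose proof (gprime_nonpos m a N e c Hm HI He ltac:(lra) Hc). fold Dc in H.
    assert (0 <= INR m - s) by lra. nra.
Qed.

Lemma ser_ge1 m a x : Inv m a -> 1 <= x <= INR m -> 1 <= ser (ws a x).
Proof.
  intros HI Hx. pose proof HI as [Ha [_ [_ [H1 _]]]].
  destruct (series_at m a x HI ltac:(lra)) as [Hs _].
  apply (is_series_le_gen _ _ _ _ H1 Hs). intros k. unfold ws. apply Rmult_le_compat_l; auto.
  apply pow_incr; lra.
Qed.

Lemma lim_PN m a x : Inv m a -> 0 <= x <= INR m -> is_lim_seq (fun N => PN a N x) (ser (ws a x)).
Proof.
  intros HI Hx. destruct (series_at m a x HI Hx) as [Hs _].
  apply is_series_Reals in Hs. apply is_lim_seq_Reals. exact Hs.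
Qed.

Lemma cont_ln l : 0 < l -> continuity_pt ln l.
Proof. intros H. apply derivable_continuous_pt. exists (/ l). apply derivable_pt_lim_ln; auto. Qed.

Lemma lim_g m a Dc x : Inv m a -> 1 <= x <= INR m ->
  is_lim_seq (fun N => gN m a N Dc x) ((INR m - 1) * ln (ser (ws a x)) - ln x - Dc * x).
Proof.
  intros HI Hx. unfold gN.
  apply is_lim_seq_minus'; [apply is_lim_seq_minus'|apply is_lim_seq_const]; [|apply is_lim_seq_const].
  apply is_lim_seq_mult'; [apply is_lim_seq_const|].
  apply (is_lim_seq_continuous ln (fun N => PN a N x)).
  - apply cont_ln. pose proof (ser_ge1 m a x HI Hx). lra.
  - apply (lim_PN m); auto; lra.
Qed.

Lemma key m a s e : (2 <= m)%nat -> Inv m a -> 1 <= s <= INR m -> 0 < e ->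
  (INR m - 1) * ln (ser (ws a (INR m))) - ln (INR m) - phig m a (INR m) * (1 + e) / INR m * INR m
  <= (INR m - 1) * ln (ser (ws a s)) - ln s - phig m a (INR m) * (1 + e) / INR m * s.
Proof.
  intros Hm HI Hs He. pose proof HI as [Ha [_ [_ [H1 _]]]].
  pose proof (INR_ge2 m Hm) as HM.
  set (Dc := phig m a (INR m) * (1 + e) / INR m).
  assert (Hev : exists N0, forall N, (N0 <= N)%nat -> 1 <= (1 + e) * PN a N 1).
  { apply is_series_Reals in H1. destruct (H1 (e / (1 + e))) as [N0 HN0].
    { apply Rlt_gt. apply Rdiv_lt_0_compat; lra. }
    exists N0. intros N HN. specialize (HN0 N HN). unfold R_dist in HN0. apply Rabs_def2 in HN0.
    fold (PN a N 1) in HN0.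
    assert ((1 + e) * (e / (1 + e)) = e) by (field; lra). nra. }
  pose proof (lim_g m a Dc (INR m) HI ltac:(lra)) as L1.
  pose proof (lim_g m a Dc s HI Hs) as L2.
  assert (Hev' : eventually (fun N => gN m a N Dc (INR m) <= gN m a N Dc s)).
  { destruct Hev as [N0 HN0]. exists N0. intros N HN. apply gN_mono; auto. }
  exact (is_lim_seq_le_loc _ _ _ _ Hev' L1 L2).
Qed.

Lemma exp_le x y : x <= y -> exp x <= exp y.
Proof. intros H. destruct (Rle_lt_or_eq_dec _ _ H). left; apply exp_increasing; auto. subst; lra. Qed.

Lemma key2 m a s : (2 <= m)%nat -> Inv m a -> 1 <= s <= INR m ->
  (INR m - 1) * ln (ser (ws a (INR m))) - ln (INR m)
  <= (INR m - 1) * ln (ser (ws a s)) - ln s + phig m a (INR m) * (INR m - s) / INR m.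
Proof.
  intros Hm HI Hs. pose proof HI as [_ [_ [_ [_ Hd]]]]. rewrite <- phig_M in Hd; auto.
  pose proof (INR_ge2 m Hm) as HM.
  set (d := phig m a (INR m)) in *.
  set (K := d * (INR m - s) / INR m).
  assert (HK : 0 <= K).
  { unfold K. unfold Rdiv. apply Rmult_le_pos. apply Rmult_le_pos; lra. left; apply Rinv_0_lt_compat; lra. }
  apply Rle_plus_epsilon. intros eps Heps.
  set (e := eps / (K + 1)).
  assert (He : 0 < e) by (unfold e; apply Rdiv_lt_0_compat; lra).
  pose proof (key m a s e Hm HI Hs He) as Hk. fold d in Hk.
  assert (E1 : d * (1 + e) / INR m * INR m - d * (1 + e) / INR m * s = K + K * e) by (unfold K; field; lra).
  assert (E2 : K * e <= eps).
  { unfold e. replace (K * (eps / (K + 1))) with (eps * (K / (K + 1))) by (field; lra).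
    rewrite <- (Rmult_1_r eps) at 2. apply Rmult_le_compat_l; [lra|].
    apply (Rmult_le_reg_r (K + 1)); [lra|]. unfold Rdiv. rewrite Rmult_assoc, Rinv_l; lra. }
  lra.
Qed.

Theorem lemma3p2 (m : nat) (qstar : nat -> R) (p : R) (n : nat)
  (Hm : (2 <= m)%nat)
  (Hq_nonneg : forall k, 0 <= qstar k)
  (Hq_sum : infinite_sum qstar 1)
  (Hq_0 : qstar 0%nat = 0)
  (Hq_ge2 : exists k, (2 <= k)%nat /\ 0 < qstar k)
  (Hq_mom : exists l, infinite_sum (fun k => INR k * INR m ^ k * qstar k) l)
  (Hp : pc m qstar < p) (Hp1 : p <= 1) :
  (forall s t, 0 < s -> s <= t -> t <= INR m ->
     phi m p qstar n s <= phi m p qstar n t /\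
     phi m p qstar n s / s <= phi m p qstar n t / t)
  /\ H m p qstar n (INR m)
       <= Rpower (INR m) (1 / (INR m - 1)) * exp (delta m p qstar n)
  /\ (forall s, 1 <= s -> s <= INR m ->
       H m p qstar n s ^ (m - 1) / s
       >= H m p qstar n (INR m) ^ (m - 1) / INR m
          * (1 - INR m * (INR m - s) * delta m p qstar n
                 * exp ((INR m - 1) * delta m p qstar n))).
Proof.
  pose proof (Inv_lawn m p qstar n Hm Hq_nonneg Hq_sum Hq_0 Hq_mom Hp Hp1) as HI.
  set (a := lawn m p qstar n) in *.
  pose proof HI as [_ [_ [_ [H1 Hd]]]]. rewrite <- phig_M in Hd; auto.
  pose proof (INR_ge2 m Hm) as HM.
  change (delta m p qstar n) with (phig m a (INR m)).
  set (d := phig m a (INR m)) in *.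
  change (H m p qstar n (INR m)) with (ser (ws a (INR m))).
  pose proof (ser_ge1 m a (INR m) HI ltac:(lra)) as HA1.
  set (A := ser (ws a (INR m))) in *.
  split; [|split].
  - intros s t Hs Hst Ht. apply (partI m a s t Hm HI Hs Hst Ht).
  - pose proof (key2 m a 1 Hm HI ltac:(lra)) as K. fold A d in K.
    rewrite (ser_eq _ _ H1), ln_1 in K.
    assert (HlA : ln A <= / (INR m - 1) * ln (INR m) + d).
    { apply (Rmult_le_reg_l (INR m - 1)); [lra|].
      replace ((INR m - 1) * (/ (INR m - 1) * ln (INR m) + d)) with (ln (INR m) + (INR m - 1) * d) by (field; lra).
      assert (d * (INR m - 1) / INR m <= (INR m - 1) * d).
      { replace (d * (INR m - 1) / INR m) with ((INR m - 1) * d * / INR m) by (field; lra).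
        rewrite <- (Rmult_1_r ((INR m - 1) * d)) at 2. apply Rmult_le_compat_l; [nra|].
        rewrite <- Rinv_1. apply Rinv_le_contravar; lra. }
      lra. }
    unfold Rpower. rewrite <- exp_plus. rewrite <- (exp_ln A) by lra. apply exp_le.
    unfold Rdiv. rewrite Rmult_1_l. exact HlA.
  - intros s Hs1 Hs2.
    change (H m p qstar n s) with (ser (ws a s)).
    pose proof (ser_ge1 m a s HI ltac:(lra)) as HS1.
    pose proof (key2 m a s Hm HI ltac:(lra)) as K. fold A d in K.
    set (S := ser (ws a s)) in *.
    set (Kv := d * (INR m - s) / INR m) in *.
    assert (HK : 0 <= Kv).
    { unfold Kv. unfold Rdiv. apply Rmult_le_pos. apply Rmult_le_pos; lra. left; apply Rinv_0_lt_compat; lra. }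
    set (X := A ^ (m - 1) / INR m). set (Y := S ^ (m - 1) / s).
    assert (HX : 0 < X) by (unfold X; apply Rdiv_lt_0_compat; [apply pow_lt|]; lra).
    assert (HY : 0 < Y) by (unfold Y; apply Rdiv_lt_0_compat; [apply pow_lt|]; lra).
    assert (Hm1 : INR (m - 1) = INR m - 1) by (rewrite minus_INR; [simpl; ring|lia]).
    assert (HlX : ln X = (INR m - 1) * ln A - ln (INR m)).
    { unfold X. rewrite ln_div, ln_pow, Hm1; try lra. apply pow_lt; lra. }
    assert (HlY : ln Y = (INR m - 1) * ln S - ln s).
    { unfold Y. rewrite ln_div, ln_pow, Hm1; try lra. apply pow_lt; lra. }
    assert (HXY : X <= Y * exp Kv).
    { rewrite <- (exp_ln X), <- (exp_ln Y), <- exp_plus by lra. apply exp_le. lra. }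
    assert (HXY2 : X * (1 - Kv) <= Y).
    { pose proof (exp_ineq1_le (- Kv)) as Hx1. rewrite exp_Ropp in Hx1.
      assert (X * / exp Kv <= Y).
      { apply (Rmult_le_reg_r (exp Kv)). apply exp_pos.
        rewrite Rmult_assoc, Rinv_l. lra. apply Rgt_not_eq, exp_pos. }
      apply Rle_trans with (X * / exp Kv); auto. apply Rmult_le_compat_l; lra. }
    assert (HE : 1 <= exp ((INR m - 1) * d)).
    { rewrite <- exp_0 at 1. apply exp_le. nra. }
    assert (HKb : Kv <= INR m * (INR m - s) * d * exp ((INR m - 1) * d)).
    { unfold Kv. assert (0 <= d * (INR m - s)) by nra.
      replace (d * (INR m - s) / INR m) with (d * (INR m - s) * / INR m) by (field; lra).
      replace (INR m * (INR m - s) * d * exp ((INR m - 1) * d)) with (d * (INR m - s) * (INR m * exp ((INR m - 1) * d))) by ring.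
      apply Rmult_le_compat_l; auto.
      assert (/ INR m <= 1) by (rewrite <- Rinv_1; apply Rinv_le_contravar; lra). nra. }
    apply Rle_ge. fold X Y. nra.
Qed.
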